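(* Let $\hat{\mathbb{N}}$ be the set of odd integers $n\ge3$, and let $X,Y \subseteq \hat{\mathbb{N}}$ be non-empty. Then $\bigcap_{n \in X} \mathrm{pPol}\, R^{0,2}_n = \bigcap_{m \in Y} \mathrm{pPol}\, R^{0,2}_m$ if and only if $X = Y$.
   Context: Partial functions are on $\{0,1\}$: an $n$-ary partial function is a map $f:\operatorname{dom} f\to\{0,1\}$ with $\operatorname{dom} f\subseteq\{0,1\}^n$. For $\rho\subseteq\{0,1\}^h$, $\mathrm{pPol}\,\rho$ is the set of partial functions $f$ such that for every $h\times n$ matrix whose rows lie in $\operatorname{dom} f$ and whose columns lie in $\rho$, the column obtained by applying $f$ row-wise lies in $\rho$. Let $\rho_{0,2}=\{(0,0),(0,1),(1,0)\}$. For $n\ge2$, $R^{0,2}_{C,n}=\{(x_1,\dots,x_n)\in\{0,1\}^n: (x_i,x_{i+1})\in\rho_{0,2}\text{ for } i\in[n], \text{ with } x_{n+1}:=x_1\}$, $R^{0,2}_{K,n}=\{(x_1,\dots,x_n): (x_i,x_j)\in\rho_{0,2}\text{ for all } i\ne j\}$, and $R^{0,2}_n=R^{0,2}_{C,n}\times R^{0,2}_{K,n}\subseteq\{0,1\}^{2n}$. *)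

(* Defs.v *)
From mathcomp Require Import all_boot.
Set Implicit Arguments. Unset Strict Implicit. Unset Printing Implicit Defensive.

Definition bvec (n : nat) := {ffun 'I_n -> bool}.

(* An n-ary partial function on {0,1}: f x = Some b means x \in dom f and
   f x = b; f x = None means x \notin dom f. *)
Definition pfun (n : nat) := bvec n -> option bool.

Definition brel (h : nat) := bvec h -> Prop.

Definition pPol (h : nat) (rho : brel h) (n : nat) (f : pfun n) : Prop :=
  forall M : 'I_h -> bvec n,
    (forall i, f (M i) <> None) ->
    (forall j : 'I_n, rho [ffun i => M i j]) ->
    rho [ffun i => odflt false (f (M i))].

Definition rho02 (a b : bool) : Prop := ~~ (a && b).

Definition RC02 (n : nat) (x : 'I_n -> bool) : Prop :=
  forall i : 'I_n, rho02 (x i) (x (ordS i)).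

Definition RK02 (n : nat) (x : 'I_n -> bool) : Prop :=
  forall i j : 'I_n, i != j -> rho02 (x i) (x j).

(* R^{0,2}_n = R^{0,2}_{C,n} x R^{0,2}_{K,n} \subseteq {0,1}^{2n}:
   first n coordinates in R_C, last n coordinates in R_K. *)
Definition R02 (n : nat) : brel (n + n) :=
  fun x => RC02 (fun i => x (lshift n i)) /\ RK02 (fun i => x (rshift n i)).
Arguments pPol : clear implicits.
Arguments R02 : clear implicits.

(* Main.v *)
Require Import Defs.
From mathcomp Require Import all_boot zify.
Set Implicit Arguments. Unset Strict Implicit. Unset Printing Implicit Defensive.

Lemma sl n m (i : 'I_n) : split (lshift m i) = inl i.
Proof. exact: (unsplitK (inl i)). Qed.
Lemma sr n m (i : 'I_m) : split (rshift n i) = inr i.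
Proof. exact: (unsplitK (inr i)). Qed.

Definition D n := ('I_n + 'I_n)%type.
Definition kk n := #|{: D n * D n}|.
Definition adj n (j l : 'I_n) := (l == ordS j) || (j == ordS l).
Definition E n (d e : D n) : bool :=
  match d, e with
  | inl i, inl i' => i != i'
  | inr j, inr l => adj j l
  | _, _ => false
  end.
Definition side n (d : D n) : bool := if d is inr _ then true else false.
Definition vec n (d : D n) : bvec (kk n) :=
  [ffun c => let p := (enum_val c : D n * D n) in
     ((p.1 == d) || (p.2 == d)) && ~~ E p.1 p.2].
Definition f n : pfun (kk n) :=
  fun x => if [pick d | vec d == x] is Some d then Some (side d) else None.

Lemma ordS_neq n (j : 'I_n) : 2 < n -> (j == ordS j) = false.
Proof.
move=> n3; apply/eqP => /(congr1 val) /=.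
case: (ltnP j.+1 n) => h.
  by rewrite modn_small //; lia.
have e : j.+1 = n by apply/eqP; rewrite eqn_leq h ltn_ord.
rewrite e modnn; have := ltn_ord j; lia.
Qed.

Lemma Eirr n (d : D n) : 2 < n -> E d d = false.
Proof. by move=> n3; case: d => i /=; rewrite ?eqxx // /adj ordS_neq. Qed.

Lemma Esym n (d e : D n) : E d e = E e d.
Proof. by case: d; case: e => i j //=; rewrite ?[j == i]eq_sym // /adj orbC. Qed.

Lemma Eside n (d e : D n) : E d e -> side d = side e.
Proof. by case: d; case: e. Qed.

Lemma disE n (d e : D n) : 2 < n ->
  (forall c, ~~ (vec d c && vec e c)) <-> E d e.
Proof.
move=> n3; split.
  move=> H; apply/negPn/negP => nE.
  have := H (enum_rank (d, e)); rewrite !ffunE enum_rankK /= !eqxx /= orbT nE.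
  done.
move=> hE c; rewrite !ffunE; set p := enum_val c.
case: p => p1 p2 /=.
apply/negP => /andP [/andP [h1 nE1] /andP [h2 _]].
have de : d != e by apply/eqP => de; rewrite de Eirr in hE.
move: h1 h2; case/orP => /eqP h1; case/orP => /eqP h2; subst.
- by rewrite eqxx in de.
- by rewrite hE in nE1.
- by rewrite Esym hE in nE1.
- by rewrite eqxx in de.
Qed.

Lemma vec_inj n : 2 < n -> injective (@vec n).
Proof.
move=> n3 d e h.
have := congr1 (fun v : bvec (kk n) => v (enum_rank (d, d) : 'I_(kk n))) h.
rewrite !ffunE enum_rankK /= eqxx Eirr //= => /esym /andP [] /orP [] /eqP //.
Qed.

Lemma fvec n (d : D n) : 2 < n -> f (vec d) = Some (side d).
Proof.
move=> n3; rewrite /f; case: pickP => [e /eqP He|H].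
  by rewrite (vec_inj n3 He).
by have := H d; rewrite eqxx.
Qed.

Lemma fdom n x : f x <> None -> exists d : D n, x = vec d.
Proof.
rewrite /f; case: pickP => [e /eqP He|] // _; by exists e.
Qed.

Lemma wind n L (Z : nat -> D n) j0 : odd L -> L < n -> Z 0 = inr j0 -> Z L = Z 0 ->
  (forall i, i < L -> E (Z i) (Z i.+1)) -> False.
Proof.
move=> oL Ln Z0 ZL HE.
have inv : forall K, K <= L -> exists j a b, Z K = inr j /\ a + b = K /\
   (j0 + a) %% n = (j + b) %% n.
  elim=> [_|K IH KL]; first by exists j0, 0, 0.
  have [j [a [b [ZK [ab cg]]]]] := IH (ltnW KL).
  have := HE K KL; rewrite ZK.
  case ZS: (Z K.+1) => [i|l] //= /orP [] /eqP el.
    exists l, a.+1, b; split=> //; split; first lia.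
    rewrite el /= modnDml.
    have -> : j0 + a.+1 = (j0 + a) + 1 by lia.
    rewrite -modnDml cg modnDml; congr (_ %% n); lia.
  exists l, a, b.+1; split=> //; split; first lia.
  rewrite cg el /=.
  have -> : l + b.+1 = (l + 1) + b by lia.
  by rewrite modnDml addn1.
have [j [a [b [ZK [ab cg]]]]] := inv L (leqnn L).
rewrite ZL Z0 in ZK; case: ZK => ej; subst j.
move/eqP: cg; rewrite eqn_modDl !modn_small; lia.
Qed.

Lemma notpol n : 2 < n -> ~ pPol (n+n) (R02 n) (kk n) (@f n).
Proof.
move=> n3 H.
pose M (r : 'I_(n+n)) := match split r with inl i => vec (inr i : D n) | inr i => vec (inl i : D n) end.
have := H M.
have i0 : 'I_n by exists 0; lia.
case.
- by move=> r; rewrite /M; case: split => i; rewrite fvec.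
- move=> c; split.
    move=> i; rewrite /rho02 !ffunE /M !sl.
    by move: c; apply/(disE _ _ n3) => /=; rewrite /adj eqxx.
  move=> i i' ne; rewrite /rho02 !ffunE /M !sr.
  by move: c; apply/(disE _ _ n3).
- by move=> HC _; have := HC i0; rewrite !ffunE /M !sl !fvec.
Qed.

Lemma pol n m : 2 < n -> odd m -> 2 < m -> m != n -> pPol (m+m) (R02 m) (kk n) (@f n).
Proof.
move=> n3; case: m => [//|m'] om m3 mn M Hdom Hcol.
have [g Hg] := fin_all_exists (fun r => @fdom n (M r) (Hdom r)).
have -> : [ffun i => odflt false (f (M i))] = [ffun r => side (g r)].
  by apply/ffunP => r; rewrite !ffunE Hg fvec.
have EC : forall i : 'I_m'.+1, E (g (lshift _ i)) (g (lshift _ (ordS i))).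
  move=> i; apply/(disE _ _ n3) => c; have := Hcol c; rewrite /R02 => -[HC _]; have := HC i.
  by rewrite /rho02 !ffunE !Hg !ffunE.
have EK : forall i i' : 'I_m'.+1, i != i' -> E (g (rshift _ i)) (g (rshift _ i')).
  move=> i i' ne; apply/(disE _ _ n3) => c; have := Hcol c; rewrite /R02 => -[_ HK]; have := HK i i' ne.
  by rewrite /rho02 !ffunE !Hg !ffunE.
have sK : forall i i', side (g (rshift m'.+1 i)) = side (g (rshift m'.+1 i')).
  move=> i i'; case: (eqVneq i i') => [->//|ne]; exact: Eside (EK _ _ ne).
case: (ltngtP m'.+1 n) => [mlt|mgt|meq]; last by rewrite meq eqxx in mn.
- split.
  + move=> i; rewrite /rho02 !ffunE.
    case S: (side (g (lshift _ i))) => //=.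
    exfalso. case GE: (g (lshift m'.+1 i)) S => [//|j0] _.
    pose Z k := g (lshift m'.+1 (inord ((i + k) %% m'.+1))).
    apply: (@wind n m'.+1 Z j0) => //.
    * by rewrite /Z addn0 modn_small // inord_val.
    * by rewrite /Z modnDr addn0.
    * move=> k _; rewrite /Z.
      have -> : inord ((i + k.+1) %% m'.+1) = ordS (inord ((i + k) %% m'.+1) : 'I_m'.+1).
        by apply/val_inj; rewrite /= !inordK ?ltn_pmod // -[((i + k) %% m'.+1).+1]addn1 modnDml addn1 addnS.
      exact: EC.
  + move=> i i' ne; rewrite /rho02 !ffunE.
    case S: (side (g (rshift _ i))) => //=.
    exfalso.
    have s0 : side (g (rshift m'.+1 (inord 0))) by rewrite (sK _ i) S.
    case GE: (g (rshift m'.+1 (inord 0))) s0 => [//|j0] _.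
    pose Z k := g (rshift m'.+1 (inord (k %% 3))).
    apply: (@wind n 3 Z j0) => //; first lia.
    case=> [|[|[|//]]] _; rewrite /Z /=; apply: EK; apply/eqP => /(congr1 val) /=; rewrite !inordK; lia.
- exfalso.
  pose h i := match g (rshift m'.+1 i) with inl j => j | inr j => j end.
  have hinj : injective h.
    move=> i i' e; apply/eqP; apply/negPn/negP => ne.
    have E1 := EK _ _ ne; move: e E1; rewrite /h.
    case: (g (rshift m'.+1 i)) => j; case: (g (rshift m'.+1 i')) => j' //= ->; rewrite ?eqxx /adj ?ordS_neq //.
  have := leq_card h hinj; rewrite !card_ord; lia.
Qed.

From Stdlib Require Import Classical FunctionalExtensionality PropExtensionality.

Lemma key (A B : nat -> Prop) :
  (forall n, A n -> odd n /\ 3 <= n) -> (forall m, B m -> odd m /\ 3 <= m) ->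
  (forall k (g : pfun k), (forall m, B m -> pPol (m + m) (R02 m) k g) ->
                          (forall n, A n -> pPol (n + n) (R02 n) k g)) ->
  forall n, A n -> B n.
Proof.
move=> hA hB imp n An; apply: NNPP => nB.
have [on n3] := hA n An.
apply: (@notpol n n3); apply: (imp (kk n) (@f n) _ n An).
move=> m Bm; have [om m3] := hB m Bm; apply: pol => //.
by apply/eqP => e; subst m.
Qed.

Theorem mainTheorem17 (X Y : nat -> Prop) :
  (forall n, X n -> odd n /\ 3 <= n) ->
  (forall m, Y m -> odd m /\ 3 <= m) ->
  (exists n, X n) -> (exists m, Y m) ->
  ((forall (k : nat) (f : pfun k),
       (forall n, X n -> pPol (n + n) (R02 n) k f) <-> (forall m, Y m -> pPol (m + m) (R02 m) k f))
   <-> X = Y).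
Proof.
move=> HX HY _ _; split; last by move=> -> k g.
move=> H; apply: functional_extensionality => x; apply: propositional_extensionality.
split; apply: key => // k g; by case: (H k g).
Qed.
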